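(* The graph $G$ defined below is countable, connected and arc transitive, and it has infinite motion.
   Context: Let $\mathbb Q^+=\{q^+: q\in\mathbb Q\}$ and $\mathbb Q^-=\{q^-: q\in\mathbb Q\}$ be two disjoint copies of $\mathbb Q$. $G$ is the simple undirected graph with vertex set $V=\mathbb Q^+\cup\mathbb Q^-$ in which the edges are exactly the pairs $\{q^+,r^-\}$ with $q,r\in\mathbb Q$ and $q<r$ (there are no edges inside $\mathbb Q^+$ or inside $\mathbb Q^-$). A graph is arc transitive if its automorphism group acts transitively on ordered pairs $(u,v)$ of adjacent vertices. A graph has infinite motion if every non-identity automorphism moves infinitely many vertices. *)

(* Defs.v *)
From HB Require Import structures.
From mathcomp Require Import all_boot all_order all_algebra.
From Stdlib Require Import Relations.
Set Implicit Arguments. Unset Strict Implicit. Unset Printing Implicit Defensive.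
Import Order.TTheory GRing.Theory Num.Theory.
Local Open Scope ring_scope.

(* Vertex set V = Q^+ ∪ Q^- : [inl q] is q^+, [inr r] is r^-. *)
Definition V : Type := (rat + rat)%type.

Definition adj (u v : V) : Prop :=
  match u, v with
  | inl q, inr r => q < r
  | inr r, inl q => q < r
  | _, _ => False
  end.

Definition is_aut (f : V -> V) : Prop :=
  bijective f /\ forall u v : V, adj u v <-> adj (f u) (f v).

Definition countable_V : Prop := exists g : V -> nat, injective g.

Definition connected_G : Prop := forall u v : V, clos_refl_trans V adj u v.

Definition arc_transitive_G : Prop :=
  forall u v u' v' : V, adj u v -> adj u' v' ->
    exists f, is_aut f /\ f u = u' /\ f v = v'.

Definition infinite_motion_G : Prop :=
  forall f, is_aut f -> (exists x, f x <> x) ->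
    ~ (exists s : seq V, forall x, f x <> x -> x \in s).

(* Main.v *)
Require Import Defs.
From HB Require Import structures.
From mathcomp Require Import all_boot all_order all_algebra.
From mathcomp Require Import ring lra.
From Stdlib Require Import Relations.
Set Implicit Arguments. Unset Strict Implicit. Unset Printing Implicit Defensive.
Import Order.TTheory GRing.Theory Num.Theory.
Local Open Scope ring_scope.

Lemma adj_sym u v : adj u v -> adj v u.
Proof. by case: u; case: v. Qed.

Lemma reach_plus (q p : rat) : clos_refl_trans V adj (inl q) (inl p).
Proof.
apply: (rt_trans _ _ _ (inr (Num.max q p + 1))).
  apply: rt_step => /=.
  have : q <= Num.max q p by rewrite le_max lexx.
  lra.
apply: rt_step => /=.
have : p <= Num.max q p by rewrite le_max lexx orbT.
lra.
Qed.

Lemma conn : connected_G.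
Proof.
have toplus : forall u p, clos_refl_trans V adj u (inl p).
  move=> [q|r] p; first exact: reach_plus.
  apply: (rt_trans _ _ _ (inl (r - 1))); first by apply: rt_step => /=; lra.
  exact: reach_plus.
move=> u [p|r]; first exact: toplus.
apply: (rt_trans _ _ _ (inl (r - 1))); first exact: toplus.
by apply: rt_step => /=; lra.
Qed.

Lemma countV : countable_V.
Proof. exists (@pickle (rat + rat)%type); exact: pcan_inj pickleK_inv. Qed.

Definition aff (a b : rat) (v : V) : V :=
  match v with inl q => inl (a * q + b) | inr r => inr (a * r + b) end.

Lemma aff_aut a b : 0 < a -> is_aut (aff a b).
Proof.
move=> a0; split.
  exists (aff a^-1 (- b / a)) => -[q|r] /=; congr (_ _); field; lra.
have key : forall x y : rat, (x < y) <-> (a * x + b < a * y + b).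
  move=> x y; rewrite ltrD2r ltr_pM2l //.
by move=> [q|r] [q'|r'] /=.
Qed.

Definition sig (v : V) : V := match v with inl q => inr (- q) | inr r => inl (- r) end.

Lemma sig_aut : is_aut sig.
Proof.
split.
  by exists sig => -[q|r] /=; rewrite opprK.
move=> [q|r] [q'|r'] /=; rewrite ?ltrN2 //.
Qed.

Lemma comp_aut f g : is_aut f -> is_aut g -> is_aut (f \o g).
Proof.
move=> [bf hf] [bg hg]; split; first exact: bij_comp.
move=> u v /=; rewrite (hg u v); exact: hf.
Qed.

Lemma arc1 q r q' r' : q < r -> q' < r' ->
  exists f, is_aut f /\ f (inl q) = inl q' /\ f (inr r) = inr r'.
Proof.
move=> h h'.
set a := (r' - q') / (r - q).
have a0 : 0 < a by rewrite /a divr_gt0 // subr_gt0.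
exists (aff a (q' - a * q)); split; first exact: aff_aut.
split => /=; congr (_ _); rewrite /a; first ring.
field; lra.
Qed.

Lemma arc2 q r q' r' : q < r -> q' < r' ->
  exists f, is_aut f /\ f (inl q) = inr r' /\ f (inr r) = inl q'.
Proof.
move=> h h'.
have [g [ga [g1 g2]]] := arc1 (q' := - r') (r' := - q') h (ltac:(lra)).
exists (sig \o g); split; first exact: comp_aut sig_aut ga.
by rewrite /= g1 g2 /= !opprK.
Qed.

Lemma arcT : arc_transitive_G.
Proof.
have main : forall q r u' v', q < r -> adj u' v' ->
    exists f, is_aut f /\ f (inl q) = u' /\ f (inr r) = v'.
  move=> q r [q'|r'] [q''|r''] h //= h'.
    exact: arc1.
  exact: arc2.
move=> [q|r] [q'|r'] u' v' //= h h'.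
  exact: main.
have [f [fa [f1 f2]]] := main _ _ _ _ h (adj_sym h').
by exists f.
Qed.

Lemma avoid (s : seq rat) p q : p < q -> exists r, [/\ p < r, r < q & r \notin s].
Proof.
elim: s q => [|t s IH] q pq.
  exists ((p + q) / 2%:R); split => //; lra.
case: (ltrP p t) => pt.
  have [|r [h1 h2 h3]] := IH (Num.min q t).
    by rewrite lt_min pq pt.
  move: h2; rewrite lt_min => /andP [h2 h4].
  exists r; split => //; rewrite in_cons negb_or h3 andbT.
  by rewrite neq_lt h4.
have [r [h1 h2 h3]] := IH q pq.
exists r; split => //; rewrite in_cons negb_or h3 andbT.
apply/eqP => e; rewrite e in h1; lra.
Qed.

Definition proj (v : V) : rat := match v with inl t => t | inr t => t end.

Lemma motion : infinite_motion_G.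
Proof.
move=> f [_ hf] [x fx] [s hs].
set S := [seq proj v | v <- s].
have fixed : forall z, proj z \notin S -> f z = z.
  move=> z hz; case: (f z =P z) => // /hs zs.
  by case/negP: hz; apply/mapP; exists z.
have keyz : forall z, proj z \notin S -> (adj x z <-> adj (f x) z).
  move=> z /fixed e; rewrite -{2}e; exact: hf.
move: fx keyz; case: x => [q|q]; case E: (f _) => [p|p] fx keyz.
- have pq : p != q by apply/eqP => e; apply: fx; rewrite e.
  case: (ltrP p q) => h.
    have [r [h1 h2 h3]] := avoid S h.
    have /= := keyz (inr r) h3; lra.
  have h' : q < p by rewrite lt_neqAle eq_sym pq h.
  have [r [h1 h2 h3]] := avoid S h'.
  have /= := keyz (inr r) h3; lra.
- have [r [h1 h2 h3]] := avoid S (ltrDl q 1 : q < q + 1) ; last first.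
  by have /= := keyz (inr r) h3; tauto.
- have qq : q - 1 < q by lra.
  have [r [h1 h2 h3]] := avoid S qq.
  by have /= := keyz (inl r) h3; tauto.
- have pq : p != q by apply/eqP => e; apply: fx; rewrite e.
  case: (ltrP p q) => h.
    have [r [h1 h2 h3]] := avoid S h.
    have /= := keyz (inl r) h3; lra.
  have h' : q < p by rewrite lt_neqAle eq_sym pq h.
  have [r [h1 h2 h3]] := avoid S h'.
  have /= := keyz (inl r) h3; lra.
Qed.

Theorem mainTheorem3 :
  countable_V /\ connected_G /\ arc_transitive_G /\ infinite_motion_G.
Proof. split; [exact: countV | split; [exact: conn | split; [exact: arcT | exact: motion]]]. Qed.
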